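(* Let $\mathcal R:(\mathbb R^d\setminus\{0\})\times\mathbb R\to\mathbb R$ be differentiable and scale-invariant in its first argument: $\mathcal R(kw,\alpha)=\mathcal R(w,\alpha)$ for all $k>0$. Let $\hat w\in\mathbb R^d$ be fixed, let $\eta,\eta_\alpha>0$, and let $(w_t,\alpha_t)$ be generated by $w_{t+1}=w_t-\eta\nabla_w\mathcal R(w_t,\alpha_t)$, $\alpha_{t+1}=\alpha_t-\eta_\alpha\partial_\alpha\mathcal R(w_t,\alpha_t)$ with $w_0\neq0$. Write $\nabla_w\mathcal R_t:=\nabla_w\mathcal R(w_t,\alpha_t)$, $\rho_t:=\langle\hat w,w_t\rangle/\|w_t\|$, $\rho_t^\perp:=\|\hat w-\rho_tw_t/\|w_t\|\|$. (Convergence) If for some $t\ge0$, $\rho_t>0$ and $$\frac{\eta\rho_t}{\|w_t\|}\|\nabla_w\mathcal R_t\|^2\le-2\langle\hat w,\nabla_w\mathcal R_t\rangle,$$ then $(\rho^\perp_{t+1})^2\le(\rho^\perp_t)^2$. (Divergence) If for some $t\ge0$, $0<\rho_t^\perp/\rho_t<1$, $\alpha_t>0$ and $$\frac{\eta}{\|w_t\|}\|\nabla_w\mathcal R_t\|\ge\frac{2\rho_t\rho_t^\perp}{\rho_t^2-(\rho_t^\perp)^2},$$ then $(\rho^\perp_{t+1})^2\ge(\rho^\perp_t)^2$.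
   Context: All norms and inner products are Euclidean. Note that scale-invariance implies $\langle w,\nabla_w\mathcal R(w,\alpha)\rangle=0$, so all iterates stay nonzero. *)

(* Defs.v *)
From HB Require Import structures.
From mathcomp Require Import all_boot all_order all_algebra.
From mathcomp Require Import all_classical all_reals all_analysis.
Set Implicit Arguments. Unset Strict Implicit. Unset Printing Implicit Defensive.
Import Order.TTheory GRing.Theory Num.Theory.
Import numFieldNormedType.Exports.
Local Open Scope ring_scope.

(* Euclidean inner product and Euclidean norm on row vectors R^d
   (MathComp's built-in norm on 'rV is the sup norm, so we define these). *)
Definition dotv {R : realType} {d : nat} (u v : 'rV[R]_d) : R :=
  \sum_(i < d) u 0 i * v 0 i.

Definition enorm {R : realType} {d : nat} (v : 'rV[R]_d) : R :=
  Num.sqrt (dotv v v).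

Definition gradw {R : realType} {d : nat} (F : 'rV[R]_d -> R -> R)
  (w : 'rV[R]_d) (a : R) : 'rV[R]_d :=
  \row_(i < d) ('D_(delta_mx 0 i) (fun v => F v a) w : R).

Definition derva {R : realType} {d : nat} (F : 'rV[R]_d -> R -> R)
  (w : 'rV[R]_d) (a : R) : R :=
  'D_1 (fun b : R => F w b) a.

Definition rho {R : realType} {d : nat} (what w : 'rV[R]_d) : R :=
  dotv what w / enorm w.

Definition rhoperp {R : realType} {d : nat} (what w : 'rV[R]_d) : R :=
  enorm (what - (rho what w / enorm w) *: w).

(* Main.v *)
Require Import Defs.
From HB Require Import structures.
From mathcomp Require Import all_boot all_order all_algebra.
From mathcomp Require Import all_classical all_reals all_analysis.
From mathcomp Require Import ring lra.
Import Order.TTheory GRing.Theory Num.Theory.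
Import numFieldNormedType.Exports.
Local Open Scope ring_scope.
Lemma div_real (R: realFieldType) (n s rho r x : R) : 0 < n -> 0 < rho -> 0 <= r -> 0 <= s ->
  2*rho*r <= s*(rho^+2 - r^+2) -> x^+2 <= (r*s*n)^+2 ->
  (rho*n - x)^+2 <= rho^+2 * (n^+2 + s^+2*n^+2).
Proof.
move=> n0 p0 r0 s0 h hx.
have rsn : 0 <= r * s * n by rewrite !mulr_ge0 // ltW.
have xb : `|x| <= r * s * n by rewrite -ler_sqr ?nnegrE // real_normK ?num_real.
have pn : 0 <= rho * n by rewrite mulr_ge0 // ltW.
have e1 : (rho*n - x)^+2 <= (rho*n + r*s*n)^+2.
  rewrite -[X in X <= _](real_normK (num_real _)) ler_sqr ?nnegrE ?normr_ge0 ?addr_ge0 //.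
  have : `|rho * n - x| <= rho * n + `|x|.
    by apply: (le_trans (ler_normB _ _)); rewrite ger0_norm.
  move=> H; apply: (le_trans H).
  by rewrite lerD2l.
apply: (le_trans e1).
have e2 : (rho + r*s)^+2 <= rho^+2 * (1 + s^+2).
  have : 0 <= s * (s*(rho^+2 - r^+2) - 2*rho*r) by rewrite mulr_ge0 // subr_ge0.
  move=> H; rewrite -subr_ge0; apply: (le_trans H); rewrite le_eqVlt; apply/orP; left; apply/eqP; ring.
have -> : (rho * n + r * s * n) ^+ 2 = (rho + r*s)^+2 * n^+2 by ring.
have -> : rho ^+ 2 * (n ^+ 2 + s ^+ 2 * n ^+ 2) = rho^+2 * (1 + s^+2) * n^+2 by ring.
by rewrite ler_wpM2r // sqr_ge0.
Qed.

Lemma conv_real (R: realFieldType) (n p q G eta H : R) : 0 < n -> 0 < eta -> 0 < p / n -> 0 <= G ->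
  eta * (p / n) / n * G <= - 2 * q ->
  H - (p - eta*q)^+2 / (n^+2 + eta^+2 * G) <= H - p^+2 / n^+2.
Proof.
move=> n0 e0 pn G0 h.
have p0 : 0 < p by rewrite -(divfK (lt0r_neq0 n0) p) mulr_gt0.
have N0 : 0 < n^+2 by rewrite exprn_gt0.
have N'0 : 0 < n^+2 + eta^+2 * G by rewrite ltr_wpDr // mulr_ge0 // sqr_ge0.
rewrite lerD2l lerN2 ler_pdivrMr // mulrAC ler_pdivlMr //.
have h' : eta * p * G <= -2 * q * n^+2.
  have e : eta * (p / n) / n * G = eta * p * G / n^+2 by field; rewrite lt0r_neq0.
  by move: h; rewrite e ler_pdivrMr.
have h2 : eta * p * (eta * p * G) <= eta * p * (-2 * q * n^+2).
  by rewrite ler_wpM2l // mulr_ge0 // ltW.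
have h3 : 0 <= eta^+2 * q^+2 * n^+2 by rewrite mulr_ge0 ?sqr_ge0 // mulr_ge0 ?sqr_ge0.
have h4 := h2; rewrite -subr_ge0 in h4.
rewrite -subr_ge0; apply: (le_trans (addr_ge0 h3 h4)).
rewrite le_eqVlt; apply/orP; left; apply/eqP; ring.
Qed.

Lemma divg_real (R: realFieldType) (n p q G sigma eta H r : R) : 0 < n -> 0 < eta -> 0 <= sigma ->
  G = sigma ^+ 2 -> 0 <= r -> r ^+ 2 = H - p^+2 / n^+2 ->
  0 < r / (p / n) < 1 ->
  eta / n * sigma >= 2 * (p / n) * r / ((p / n)^+2 - r^+2) ->
  q ^+ 2 <= r ^+ 2 * G ->
  H - p^+2 / n^+2 <= H - (p - eta*q)^+2 / (n^+2 + eta^+2 * G).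
Proof.
move=> n0 e0 sg0 -> r0 rE /andP[h1 h2] hs hq.
set rho := p / n.
have pE : p = rho * n by rewrite /rho divfK // lt0r_neq0.
have rho0 : 0 < rho.
  rewrite ltNge; apply/negP => hr.
  move: h1; rewrite ltNge => /negP; apply.
  by rewrite mulr_ge0_le0 // invr_le0.
have rr : r < rho by rewrite ltr_pdivrMr // mul1r in h2.
set s := eta / n * sigma.
have sE : eta * sigma = s * n by rewrite /s mulrAC divfK // lt0r_neq0.
have s0 : 0 <= s by rewrite /s !mulr_ge0 // ltW // invr_gt0.
have d0 : 0 < rho^+2 - r^+2 by rewrite subr_gt0 ltr_pXn2r // ?nnegrE // ltW.
have hs' : 2 * rho * r <= s * (rho^+2 - r^+2) by rewrite -ler_pdivrMr.
have hx : (eta * q)^+2 <= (r * s * n)^+2.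
  rewrite exprMn -(mulrA r) -sE !exprMn mulrCA ler_wpM2l // ?sqr_ge0 //.
have key := @div_real _ _ _ _ _ (eta*q) n0 rho0 r0 s0 hs' hx.
have N0 : 0 < n^+2 by rewrite exprn_gt0.
have N'0 : 0 < n^+2 + eta^+2 * sigma^+2 by rewrite ltr_wpDr // mulr_ge0 // sqr_ge0.
rewrite lerD2l lerN2 ler_pdivrMr // pE.
have -> : (rho * n)^+2 / n^+2 = rho ^+2 by field; rewrite lt0r_neq0.
have -> : eta ^+ 2 * sigma ^+ 2 = s^+2 * n^+2 by rewrite -exprMn sE exprMn.
exact: key.
Qed.
Lemma orth (R : realType) (d : nat) (F : 'rV[R]_d -> R -> R)
  (HFdiff : forall (w : 'rV[R]_d) (a : R), w != 0 ->
     differentiable (fun p : 'rV[R]_d * R => F p.1 p.2) (w, a))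
  (HFscale : forall (w : 'rV[R]_d) (a k : R), w != 0 -> 0 < k ->
     F (k *: w) a = F w a) (w : 'rV[R]_d) (a : R) :
  w != 0 -> dotv w (gradw F w a) = 0.
Proof.
move=> w0.
pose f := fun v : 'rV[R]_d => F v a.
have df : differentiable f w.
  have -> : f = (fun p : 'rV[R]_d * R => F p.1 p.2) \o (fun v => (v, a)) by [].
  apply: differentiable_comp; last exact: HFdiff.
  apply: differentiable_pair => //.
have Dw : 'D_w f w = 0.
  rewrite /derive; apply: cvg_lim => //.
  apply: cvg_near_cst.
  near=> h.
  have h1 : `|h| < 1 by near: h; exact: dnbhs0_lt.
  rewrite /= /f.
  have -> : h *: w + w = (h + 1) *: w by rewrite scalerDl scale1r.
  rewrite HFscale // ?subrr ?scaler0 //.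
  move: h1; rewrite ltr_norml; lra.
rewrite /dotv.
transitivity (\sum_(i < d) w 0 i * 'd f w (delta_mx 0 i)).
  apply: eq_bigr => i _; rewrite mxE -deriveE //.
transitivity ('d f w w); last by rewrite -(deriveE _ df).
have -> : 'd f w w = 'd f w (\sum_(j < d) w 0 j *: delta_mx 0 j) by rewrite -row_sum_delta.
rewrite linear_sum; apply: eq_bigr => i _.
by rewrite linearZ.
Unshelve. all: by end_near.
Qed.


Section Dot.
Variables (R : realType) (d : nat).
Implicit Types x y z : 'rV[R]_d.

Lemma dotvC x y : dotv x y = dotv y x.
Proof. by apply: eq_bigr => i _; rewrite mulrC. Qed.

Lemma dotvDl x y z : dotv (x + y) z = dotv x z + dotv y z.
Proof. by rewrite /dotv -big_split; apply: eq_bigr => i _; rewrite mxE mulrDl. Qed.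

Lemma dotvBl x y z : dotv (x - y) z = dotv x z - dotv y z.
Proof. by rewrite /dotv -sumrB; apply: eq_bigr => i _; rewrite !mxE mulrBl. Qed.

Lemma dotvZl a x z : dotv (a *: x) z = a * dotv x z.
Proof. by rewrite /dotv mulr_sumr; apply: eq_bigr => i _; rewrite mxE mulrA. Qed.

Lemma dotvDr x y z : dotv z (x + y) = dotv z x + dotv z y.
Proof. by rewrite dotvC dotvDl !(dotvC z). Qed.

Lemma dotvBr x y z : dotv z (x - y) = dotv z x - dotv z y.
Proof. by rewrite dotvC dotvBl !(dotvC z). Qed.

Lemma dotvZr a x z : dotv z (a *: x) = a * dotv z x.
Proof. by rewrite dotvC dotvZl dotvC. Qed.

Lemma dotv_ge0 x : 0 <= dotv x x.
Proof. by apply: sumr_ge0 => i _; rewrite -expr2 sqr_ge0. Qed.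

Lemma dotv_gt0 x : x != 0 -> 0 < dotv x x.
Proof.
move=> x0; rewrite lt_def dotv_ge0 andbT; apply/negP => /eqP H.
move/negP: x0; apply; apply/eqP/matrixP => i j.
rewrite ord1 mxE.
have /(_ _) := @psumr_eq0P _ _ xpredT (fun k => x 0 k * x 0 k).
move=> /(_ (fun k _ => ltac:(rewrite -expr2; exact: sqr_ge0)) H j isT) /eqP.
by rewrite mulf_eq0 orbb => /eqP.
Qed.

Lemma enorm_sq x : enorm x ^+ 2 = dotv x x.
Proof. by rewrite /enorm sqr_sqrtr // dotv_ge0. Qed.

Lemma enorm_ge0 x : 0 <= enorm x.
Proof. exact: sqrtr_ge0. Qed.

Lemma CS x y : dotv x y ^+ 2 <= dotv x x * dotv y y.
Proof.
set X := dotv x x; set Y := dotv y y; set q := dotv x y.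
have e a b : 0 <= a ^+ 2 * X + 2 * a * b * q + b ^+ 2 * Y.
  have := dotv_ge0 (a *: x + b *: y).
  rewrite dotvDl !dotvDr !dotvZl !dotvZr (dotvC y x) -/X -/Y -/q.
  by move=> h; apply: (le_trans h); rewrite le_eqVlt; apply/orP; left; apply/eqP; ring.
have h1 : 0 <= Y * (X * Y - q ^+ 2).
  by have := e Y (- q); congr (_ <= _); ring.
have h2 : 0 <= X * (X * Y - q ^+ 2).
  by have := e q (- X); congr (_ <= _); ring.
have h3 := e 1 (- q).
have hX : 0 <= X := dotv_ge0 x.
have hY : 0 <= Y := dotv_ge0 y.
rewrite -subr_ge0.
have [Yp|] := ltrP 0 Y; first by rewrite -(pmulr_rge0 _ Yp).
have [Xp|] := ltrP 0 X; first by rewrite -(pmulr_rge0 _ Xp).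
move=> X0 Y0.
have -> : X = 0 by apply/eqP; rewrite eq_le X0 hX.
have -> : Y = 0 by apply/eqP; rewrite eq_le Y0 hY.
move: h3; have -> : X = 0 by apply/eqP; rewrite eq_le X0 hX.
have -> : Y = 0 by apply/eqP; rewrite eq_le Y0 hY.
nra.
Qed.

Lemma enorm_gt0 x : x != 0 -> 0 < enorm x.
Proof. by move=> x0; rewrite /enorm sqrtr_gt0 dotv_gt0. Qed.

Lemma rhoperp_sq (what x : 'rV[R]_d) : x != 0 ->
  rhoperp what x ^+ 2 = dotv what what - dotv what x ^+ 2 / enorm x ^+ 2.
Proof.
move=> x0; have n0 := @enorm_gt0 _ x0.
rewrite /rhoperp enorm_sq /rho.
set c := _ / enorm x / enorm x.
rewrite dotvBl !dotvBr !dotvZl !dotvZr (dotvC x what) -[dotv x x](enorm_sq x) /c.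
by field; rewrite lt0r_neq0.
Qed.

Lemma step_nn x g eta : dotv x g = 0 ->
  dotv (x - eta *: g) (x - eta *: g) = dotv x x + eta ^+ 2 * dotv g g.
Proof.
move=> o; rewrite dotvBl !dotvBr !dotvZl !dotvZr (dotvC g x) o; ring.
Qed.

End Dot.
Arguments dotv_gt0 {R d x}. Arguments step_nn {R d x g}. Arguments rhoperp_sq {R d}.
Arguments enorm_gt0 {R d x}. Arguments dotv_ge0 {R d}. Arguments enorm_ge0 {R d}.
Arguments CS {R d}. Arguments enorm_sq {R d}.

Theorem lemma5p1 (R : realType) (d : nat) (F : 'rV[R]_d -> R -> R)
  (HFdiff : forall (w : 'rV[R]_d) (a : R), w != 0 ->
     differentiable (fun p : 'rV[R]_d * R => F p.1 p.2) (w, a))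
  (HFscale : forall (w : 'rV[R]_d) (a k : R), w != 0 -> 0 < k ->
     F (k *: w) a = F w a)
  (what : 'rV[R]_d) (eta eta_a : R) (Heta : 0 < eta) (Heta_a : 0 < eta_a)
  (w : nat -> 'rV[R]_d) (alpha : nat -> R)
  (Hw0 : w 0%N != 0)
  (Hwrec : forall t, w t.+1 = w t - eta *: gradw F (w t) (alpha t))
  (Halpharec : forall t, alpha t.+1 = alpha t - eta_a * derva F (w t) (alpha t)) :
  (forall t : nat,
     0 < rho what (w t) ->
     eta * rho what (w t) / enorm (w t) * enorm (gradw F (w t) (alpha t)) ^+ 2
       <= - 2 * dotv what (gradw F (w t) (alpha t)) ->
     rhoperp what (w t.+1) ^+ 2 <= rhoperp what (w t) ^+ 2)
  /\
  (forall t : nat,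
     0 < rhoperp what (w t) / rho what (w t) < 1 ->
     0 < alpha t ->
     eta / enorm (w t) * enorm (gradw F (w t) (alpha t))
       >= 2 * rho what (w t) * rhoperp what (w t)
          / (rho what (w t) ^+ 2 - rhoperp what (w t) ^+ 2) ->
     rhoperp what (w t.+1) ^+ 2 >= rhoperp what (w t) ^+ 2).
Proof.
have og t : w t != 0 -> dotv (w t) (gradw F (w t) (alpha t)) = 0.
  exact: orth.
have nz t : w t != 0.
  elim: t => [//|t IH]; rewrite Hwrec.
  apply/eqP => h.
  have := step_nn eta (og t IH); rewrite h.
  have : dotv (0 : 'rV[R]_d) 0 = 0 by rewrite /dotv big1 // => i _; rewrite mxE mul0r.
  move=> ->; have := dotv_gt0 IH; have := dotv_ge0 (gradw F (w t) (alpha t)).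
  have := sqr_ge0 eta; nra.
have Enext t : rhoperp what (w t.+1) ^+ 2 = dotv what what -
    (dotv what (w t) - eta * dotv what (gradw F (w t) (alpha t))) ^+ 2 /
    (enorm (w t) ^+ 2 + eta ^+ 2 * enorm (gradw F (w t) (alpha t)) ^+ 2).
  rewrite rhoperp_sq // enorm_sq Hwrec step_nn ?og // !enorm_sq.
  by rewrite dotvBr dotvZr.
split => t.
  move=> h1 h2; rewrite Enext rhoperp_sq //.
  apply: conv_real => //; first exact: enorm_gt0.
  by rewrite sqr_ge0.
move=> h1 _ h3; rewrite Enext [X in X <= _]rhoperp_sq //.
have r0 : 0 <= rhoperp what (w t) by exact: enorm_ge0.
apply: (@divg_real _ _ _ _ _ (enorm (gradw F (w t) (alpha t))) _ _ (rhoperp what (w t))) => //.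
- exact: enorm_gt0.
- exact: enorm_ge0.
- exact: rhoperp_sq.
- rewrite /rhoperp enorm_sq.
  set v := what - _.
  have -> : dotv what (gradw F (w t) (alpha t)) = dotv v (gradw F (w t) (alpha t)).
    by rewrite /v dotvBl dotvZl og // mulr0 subr0.
  rewrite enorm_sq; exact: CS.
Qed.
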